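(* Let $n$ be odd and squarefree, and let $A=S(n)$. Let $S=(x_1,\ldots,x_l)$ be a sequence in $\mathbb{Z}_n$ such that for every prime divisor $p$ of $n$, at least two terms of $S$ are coprime to $p$. Suppose at most one term of $S$ is a unit. Then $S$ is an $A$-weighted zero-sum sequence.
   Context: $\mathbb{Z}_n$ is the integers mod $n$, $U(n)$ its unit group. For $A\subseteq\mathbb{Z}_n$, a sequence $(x_1,\ldots,x_l)$ is an $A$-weighted zero-sum sequence if there exist $a_1,\ldots,a_l\in A$ with $\sum a_ix_i=0$. For odd $n=\prod p_i^{r_i}$ and $a\in U(n)$, $\left(\frac{a}{n}\right)=\prod\left(\frac{a}{p_i}\right)^{r_i}$ (Legendre symbols of the images of $a$ mod $p_i$), and $S(n)$ is the kernel of $a\mapsto\left(\frac{a}{n}\right)$ on $U(n)$. *)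

(* Defs.v *)
(* Z_n is represented by natural-number representatives
   with congruence mod n (this also covers n = 1, where 'Z_1 would be wrong). *)
From mathcomp Require Import all_boot all_order all_algebra.
Set Implicit Arguments. Unset Strict Implicit. Unset Printing Implicit Defensive.
Import GRing.Theory.

Definition legendre (a p : nat) : int :=
  if p %| a then 0%R
  else if [exists x : 'I_p, x * x == a %[mod p]] then 1%R else (-1)%R.

Definition jacobi (a n : nat) : int :=
  (\prod_(p <- primes n) legendre a p ^+ logn p n)%R.

Definition inS (n a : nat) : bool := coprime a n && (jacobi a n == 1%R).

Definition weighted_zero_sum (n : nat) (A : pred nat) (s : seq nat) : Prop :=
  exists a : nat -> nat,
    (forall i, i < size s -> A (a i)) /\
    \sum_(i < size s) a i * nth 0 s i = 0 %[mod n].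

(* n is squarefree: the only d with d^2 | n is d = 1 (so n = 0 is excluded). *)
Definition squarefree (n : nat) : Prop := forall d, d * d %| n -> d = 1.

(* Main.v *)
Require Import Defs.
From mathcomp Require Import all_boot all_order all_algebra zify.
From Stdlib Require Import IndefiniteDescription.
Set Implicit Arguments. Unset Strict Implicit. Unset Printing Implicit Defensive.
Import GRing.Theory.


Lemma gcd_prime a n : 0 < n -> ~~ coprime a n ->
  prime (pdiv (gcdn a n)) /\ pdiv (gcdn a n) %| a /\ pdiv (gcdn a n) %| n.
Proof.
move=> n0 nc.
have g1 : 1 < gcdn a n.
  by rewrite ltn_neqAle eq_sym nc gcdn_gt0 n0 orbT.
split; first exact: pdiv_prime.
have := pdiv_dvd (gcdn a n); rewrite dvdn_gcd => /andP[-> ->]; done.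
Qed.

Lemma coprime_of_primes a n : 0 < n ->
  (forall p, p \in primes n -> ~~ (p %| a)) -> coprime a n.
Proof.
move=> n0 H; apply/negPn/negP => nc.
have [pp [pa pn]] := gcd_prime n0 nc.
have : pdiv (gcdn a n) \in primes n by rewrite mem_primes pp n0.
by move/H; rewrite pa.
Qed.

Lemma count_le1 (T : eqType) (a : pred T) (s : seq T) x0 i j :
  count a s <= 1 -> i < size s -> j < size s -> a (nth x0 s i) -> a (nth x0 s j) -> i = j.
Proof.
elim: s i j => [|x s IH] [|i] [|j] //= c hi hj ai aj.
- have : 0 < count a s by rewrite -has_count; apply/hasP; exists (nth x0 s j) => //; exact: mem_nth.
  by move: c; rewrite ai; case: (count a s).
- have : 0 < count a s by rewrite -has_count; apply/hasP; exists (nth x0 s i) => //; exact: mem_nth.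
  by move: c; rewrite aj; case: (count a s).
- congr S; apply: IH => //; move: c; case: (a x) => //= c; exact: ltnW.
Qed.

Lemma count_ge2 (T : eqType) (a : pred T) (s : seq T) x0 :
  2 <= count a s -> exists j k, [/\ j < size s, k < size s, j != k, a (nth x0 s j) & a (nth x0 s k)].
Proof.
elim: s => [|x s IH] //=.
case ax: (a x) => /= c.
- have : has a s by rewrite has_count.
  case/hasP => y /(nthP x0) [k ks <-] ak.
  by exists 0, k.+1.
- have [j [k [? ? ? ? ?]]] := IH c.
  by exists j.+1, k.+1.
Qed.
Section RS. Local Open Scope ring_scope.

Lemma field_core (F : fieldType) (y : nat -> F) (N u : nat) (oj : 'I_N) (v : nat -> F) :
  y oj != 0 -> u != oj -> (forall i, v i != 0) -> v u = 1 ->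
  \sum_(i < N | i != oj) v i * y i != 0 ->
  exists w : nat -> F, (forall i, w i != 0) /\ w u = 1 /\ \sum_(i < N) w i * y i = 0.
Proof.
move=> yj uj vn vu S0.
set S := \sum_(i < N | i != oj) v i * y i in S0.
exists (fun i : nat => if i == (oj : nat) then - S / y oj else v i); split; [|split].
- move=> i; case: ifP => // _; rewrite mulf_neq0 ?oppr_eq0 ?invr_eq0 //.
- by rewrite (negbTE uj).
- rewrite (bigD1 oj) //= eqxx mulfVK //.
  rewrite (eq_bigr (fun i : 'I_N => v i * y i)) ?addNr // => i /negbTE H.
  by rewrite (_ : (i == oj :> nat) = false) // -H.
Qed.

Lemma field_part (F : fieldType) (y : nat -> F) (N u : nat) :
  (2:F) != 0 -> ((u < N)%N -> y u != 0) ->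
  (exists j k, [/\ (j < N)%N, (k < N)%N, j != k, y j != 0 & y k != 0]) ->
  exists w : nat -> F, (forall i, w i != 0) /\ w u = 1 /\ \sum_(i < N) w i * y i = 0.
Proof.
move=> h2 hu [j [k [jN kN jk yj yk]]].
wlog uj : j k jN kN jk yj yk / u != j.
  move=> W; case: (eqVneq u j) => [ej|]; last exact: W jk yj yk.
  apply: (W k j) => //; [by rewrite eq_sym | by rewrite ej].
pose oj := Ordinal jN; pose ok := Ordinal kN.
have okj : ok != oj by apply: contra jk => /eqP[->].
pose R := \sum_(i < N | i != oj) y i.
case: (eqVneq R 0) => R0; last first.
  apply: (@field_core _ y N u oj (fun _ => 1)) => //; first by move=> ?; exact: oner_neq0.
  by rewrite (eq_bigr (fun i : 'I_N => y i)) // => i _; rewrite mul1r.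
pose c : F := if k == u then 1 else 2.
pose d : F := if k == u then 2 else 1.
have cn : c != 0 by rewrite /c; case: ifP => _ //; exact: oner_neq0.
have dn : d != 0 by rewrite /d; case: ifP => _ //; exact: oner_neq0.
have cd : c - d != 0.
  rewrite /c /d; case: ifP => _.
    by rewrite (_ : 1 - 2 = - 1 :> F) ?oppr_eq0 ?oner_neq0 // ; rewrite -[2]/(1+1) opprD addrA subrr add0r.
  by rewrite (_ : 2 - 1 = 1 :> F) ?oner_neq0 // -[2]/(1+1) addrK.
apply: (@field_core _ y N u oj (fun i => if i == k then c else d)) => //.
- by move=> i; case: ifP.
- rewrite /c /d; case: (u =P k) => [uk|uk]; first by rewrite uk eqxx.
  by case: eqP => // ku; case: uk.
- have e1 : R = y k + \sum_(i < N | (i != oj) && (i != ok)) y i by rewrite /R (bigD1 ok).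
  rewrite (bigD1 ok) // /= eqxx.
  rewrite (eq_bigr (fun i : 'I_N => d * y i)); last first.
    move=> i /andP[_ ik]; rewrite (_ : (i == k :> nat) = false) //.
    by apply/negbTE; apply: contra ik => /eqP ik; apply/eqP/val_inj.
  rewrite -mulr_sumr.
  have : \sum_(i < N | (i != oj) && (i != ok)) y i = - y k.
    by apply/eqP; rewrite -subr_eq0 opprK addrC -e1 R0.
  move=> ->; rewrite mulrN -mulrBl mulf_neq0 //.
Qed.
End RS.

Lemma prime_part p (s : seq nat) u : prime p -> odd p ->
  (u < size s -> coprime (nth 0 s u) p) -> 2 <= count (fun x => coprime x p) s ->
  exists c : nat -> nat, (forall i, coprime (c i) p) /\ c u = 1 /\
     p %| \sum_(i < size s) c i * nth 0 s i.
Proof.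
move=> pp op hu hc.
have chF := pchar_Fp pp.
have Z m : (m%:R == 0 :> 'F_p)%R = (p %| m) by rewrite (dvdn_pcharf chF).
have Cp m : coprime m p = ~~ (m%:R == 0 :> 'F_p)%R by rewrite Z coprime_sym prime_coprime.
have [j [k [jN kN jk yj yk]]] := count_ge2 0 hc.
have h2 : (2%:R != 0 :> 'F_p)%R.
  by rewrite Z (dvdn_prime2 pp (isT : prime 2)); apply/negP => /eqP p2; move: op; rewrite p2.
have [w [wn [wu ws]]] : exists w : nat -> 'F_p, (forall i, w i != 0)%R /\ w u = 1%R /\
     (\sum_(i < size s) w i * (nth 0 s i)%:R = 0)%R.
  apply: (@field_part _ (fun i => (nth 0 s i)%:R)%R) => //.
  - by move=> /hu; rewrite Cp.
  - by exists j, k; rewrite -!Cp.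
have cw i : ((if i == u then 1 else nat_of_ord (w i))%:R = w i :> 'F_p)%R.
  by case: eqP => [->|_]; rewrite ?wu // natr_Zp.
exists (fun i => if i == u then 1 else nat_of_ord (w i)); split; [|split].
- by move=> i; rewrite Cp cw.
- by rewrite eqxx.
- rewrite -Z natr_sum; apply/eqP; rewrite -[RHS]ws; apply: eq_bigr => i _.
  by rewrite natrM cw.
Qed.

Lemma legendre_mod a b p : a = b %[mod p] -> legendre a p = legendre b p.
Proof.
by move=> H; rewrite /legendre /dvdn H.
Qed.

Lemma legendre1 p : 1 < p -> legendre 1 p = 1%R.
Proof.
move=> p1; rewrite /legendre dvdn1 gtn_eqF //.
by case: existsP => // -[]; exists (Ordinal p1).
Qed.

Lemma legendre_pm a p : ~~ (p %| a) -> legendre a p = 1%R \/ legendre a p = (-1)%R.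
Proof. by rewrite /legendre => /negbTE ->; case: ifP; [left|right]. Qed.

Lemma nonresidue p : prime p -> odd p -> exists g, ~~ (p %| g) /\ legendre g p = (-1)%R.
Proof.
move=> pp op.
have p0 : 0 < p by exact: prime_gt0.
have p3 : 2 < p by case: p pp op p0 => [|[|[|]]].
case: (boolP [forall g : 'I_p, (g != 0 :> nat) ==> [exists x : 'I_p, x * x == g %[mod p]]]) => H; last first.
  move: H; rewrite negb_forall => /existsP [g]; rewrite negb_imply => /andP [g0 ng].
  exists g; split; first by rewrite /dvdn modn_small ?ltn_ord.
  by rewrite /legendre (negbTE ng) /dvdn modn_small ?ltn_ord // (negbTE g0).
exfalso.
pose sq (x : 'I_p) : 'I_p := Ordinal (ltn_pmod (x * x) p0).
have surj : forall y, y \in codom sq.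
  move=> [[|y'] hy].
    by apply/codomP; exists (Ordinal hy); apply/val_inj => /=; rewrite mod0n.
  move: H => /forallP /(_ (Ordinal hy)) /= /existsP [x /eqP hx].
  apply/codomP; exists x; apply/val_inj => /=; by rewrite hx modn_small.
have : #|image sq 'I_p| == #|'I_p|.
  by apply/eqP; apply: eq_card => y; rewrite /= surj.
move/image_injP => inj.
have pm : p.-1 < p by rewrite ltn_predL.
have e : sq (Ordinal (ltnW p3)) = sq (Ordinal pm).
  apply/val_inj => /=.
  rewrite muln1 modn_small ?(ltnW p3) //.
  have -> : p.-1 * p.-1 = (p - 2) * p + 1 by nia.
  by rewrite modnMDl modn_small ?(ltnW p3).
have := inj _ _ isT isT e; move/(congr1 val) => /=; lia.
Qed.

Lemma sf_pos n : squarefree n -> 0 < n.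
Proof. by case: n => // H; have := H 0 (dvdn0 _). Qed.

Lemma sf_logn n p : squarefree n -> p \in primes n -> logn p n = 1.
Proof.
move=> H hp; have := hp; rewrite mem_primes => /and3P [pp n0 pn].
have : 0 < logn p n by rewrite logn_gt0.
case E: (logn p n) => [|[|k]] // _.
have : p ^ 2 %| n by rewrite pfactor_dvdn // E.
by rewrite expnS expn1 => /H p1; move: pp; rewrite p1.
Qed.

Lemma sf_prod n : squarefree n -> n = \prod_(p <- primes n) p.
Proof.
move=> H; rewrite {1}(prod_prime_decomp (sf_pos H)) prime_decompE big_map /=.
by apply: eq_big_seq => p hp; rewrite sf_logn // expn1.
Qed.

Lemma cop_prod p (l : seq nat) : prime p -> p \notin l -> all prime l -> coprime p (\prod_(q <- l) q).
Proof.
move=> pp; elim: l => [|q l IH]; first by rewrite big_nil coprimen1.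
rewrite in_cons negb_or => /andP [pq pl] /= /andP [qq ql].
rewrite big_cons coprimeMr IH // andbT prime_coprime // dvdn_prime2 //.
Qed.

Lemma dvd_prod q (l : seq nat) : q \in l -> q %| \prod_(p <- l) p.
Proof.
elim: l => [|p l IH] //; rewrite in_cons big_cons => /orP [/eqP ->|ql].
  exact: dvdn_mulr.
by apply: dvdn_mull; apply: IH.
Qed.

Lemma prod_dvd (l : seq nat) M : uniq l -> all prime l -> (forall p, p \in l -> p %| M) ->
  \prod_(p <- l) p %| M.
Proof.
elim: l => [|p l IH]; first by rewrite big_nil dvd1n.
move=> /= /andP [pl ul] /andP [pp al] H.
rewrite big_cons Gauss_dvd ?cop_prod // H ?mem_head //= IH // => q ql.
by apply: H; rewrite in_cons ql orbT.
Qed.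

Lemma crt (l : seq nat) (f : nat -> nat) : uniq l -> all prime l ->
  exists a, forall p, p \in l -> a = f p %[mod p].
Proof.
elim: l => [|p l IH]; first by exists 0.
move=> /= /andP [pl ul] /andP [pp al].
have [a Ha] := IH ul al.
have co := cop_prod pp pl al.
exists (chinese p (\prod_(q <- l) q) (f p) a) => q; rewrite in_cons => /orP [/eqP ->|ql].
  exact: chinese_modl.
rewrite -(modn_dvdm _ (dvd_prod ql)) chinese_modr // modn_dvdm ?dvd_prod //.
exact: Ha.
Qed.

Lemma choice_nat (T : Type) (P : nat -> T -> Prop) :
  (forall p, exists x, P p x) -> exists F : nat -> T, forall p, P p (F p).
Proof.
move=> H; exists (fun p => proj1_sig (constructive_indefinite_description _ (H p))).
by move=> p; exact: proj2_sig.
Qed.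

Lemma odd_of_dvd p n : odd n -> p %| n -> odd p.
Proof.
move=> on pn; apply/negPn/negP => ep.
have : 2 %| n by apply: dvdn_trans pn; rewrite dvdn2.
by rewrite dvdn2 on.
Qed.

Theorem lemma2p10 (n : nat) (s : seq nat) :
  odd n -> squarefree n ->
  (forall p, prime p -> p %| n -> 2 <= count (fun x => coprime x p) s) ->
  count (fun x => coprime x n) s <= 1 ->
  weighted_zero_sum n (inS n) s.
Proof.
move=> on sf Hp Hu.
have n0 := sf_pos sf.
pose u := find (fun x => coprime x n) s.
have Hunit i : i < size s -> coprime (nth 0 s i) n -> i = u.
  move=> iN ci.
  have hs : has (fun x => coprime x n) s by apply/hasP; exists (nth 0 s i) => //; exact: mem_nth.
  apply: (count_le1 (x0 := 0) Hu iN) => //; first by rewrite -has_find.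
  exact: (nth_find 0 hs).
have HC : forall p, exists c : nat -> nat, prime p -> p %| n ->
    (forall i, coprime (c i) p) /\ c u = 1 /\ p %| \sum_(i < size s) c i * nth 0 s i.
  move=> p; case: (boolP (prime p && (p %| n))) => [/andP[pp pn]|h]; last first.
    by exists (fun _ => 0) => pp pn; rewrite pp pn in h.
  have hu : u < size s -> coprime (nth 0 s u) p.
    move=> uN; apply: coprime_dvdr pn _.
    have hs : has (fun x => coprime x n) s by rewrite has_find.
    exact: (nth_find 0 hs).
  have [c Hc] := @prime_part p s u pp (odd_of_dvd on pn) hu (Hp p pp pn).
  by exists c.
have [C HCp] := choice_nat HC.
have HG : forall p, exists g, prime p -> odd p -> ~~ (p %| g) /\ legendre g p = (-1)%R.
  move=> p; case: (boolP (prime p && odd p)) => [/andP[pp op]|h]; last first.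
    by exists 0 => pp op; rewrite pp op in h.
  by have [g Hg] := nonresidue pp op; exists g.
have [G HGp] := choice_nat HG.
pose q i := pdiv (gcdn (nth 0 s i) n).
pose P i := (\prod_(p <- primes n | p != q i) legendre (C p i) p)%R.
pose f i p := if (i != u) && (p == q i) then (if P i == 1%R then 1 else G p) else C p i.
have HA : forall i, exists a, forall p, p \in primes n -> a = f i p %[mod p].
  move=> i; exact: crt (primes_uniq n) (all_prime_primes n).
have [A HAp] := choice_nat HA.
have prim p : p \in primes n -> [/\ prime p, odd p & p %| n].
  rewrite mem_primes => /and3P [pp _ pn]; split => //; exact: odd_of_dvd on pn.
have Hq i : i < size s -> i != u -> [/\ prime (q i), q i %| nth 0 s i & q i %| n].
  move=> iN iu; have nc : ~~ coprime (nth 0 s i) n.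
    by apply/negP => /(Hunit i iN) /eqP; rewrite (negbTE iu).
  by have [? [? ?]] := gcd_prime n0 nc.
exists A; split.
- move=> i iN; rewrite /inS; apply/andP; split.
  + apply: (coprime_of_primes n0) => p hp.
    have [pp op pn] := prim p hp.
    rewrite /dvdn (HAp i p hp) -/(dvdn p (f i p)) /f.
    case: ifP => _.
      case: ifP => _; first by rewrite dvdn1 gtn_eqF ?prime_gt1.
      by have [] := HGp p pp op.
    have [cop _] := HCp p pp pn.
    by rewrite -prime_coprime // coprime_sym.
  + have E : jacobi (A i) n = (\prod_(p <- primes n) legendre (f i p) p)%R.
      rewrite /jacobi; apply: eq_big_seq => p hp.
      by rewrite sf_logn // GRing.expr1; apply: legendre_mod; apply: HAp.
    rewrite E; case: (eqVneq i u) => [iu|iu].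
      rewrite big1_seq // => p /andP [_ hp].
      have [pp op pn] := prim p hp.
      rewrite /f iu eqxx /=.
      by have [_ [-> _]] := HCp p pp pn; rewrite legendre1 ?prime_gt1.
    have [qp qy qn] := Hq i iN iu.
    have qin : q i \in primes n by rewrite mem_primes qp n0 qn.
    rewrite (bigD1_seq (q i) qin (primes_uniq n)) /=.
    rewrite (eq_bigr (fun p => legendre (C p i) p)); last first.
      by move=> p /negbTE pq; rewrite /f pq andbF.
    rewrite -/(P i) /f iu eqxx /=.
    have Ppm : P i = 1%R \/ P i = (-1)%R.
      rewrite /P big_seq_cond; apply: (big_ind (fun x : int => x = 1%R \/ x = (-1)%R)).
      * by left.
      * by move=> x y [->|->] [->|->]; rewrite ?mulr1 ?mul1r ?mulrNN ?mulr1; [left|right|right|left].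
      * move=> p /andP [hp _].
        have [pp op pn] := prim p hp.
        have [cop _] := HCp p pp pn.
        by apply: legendre_pm; rewrite -prime_coprime // coprime_sym.
    case: Ppm => ->; rewrite ?eqxx.
      by rewrite legendre1 ?prime_gt1 // mulr1.
    have [_ HG1] := HGp (q i) qp (odd_of_dvd on qn).
    have e : ((-1 : int) == 1)%R = false by []. rewrite e HG1.
    by rewrite mulrNN mulr1.
- rewrite mod0n; apply/eqP; rewrite -/(dvdn n _) {1}(sf_prod sf).
  apply: prod_dvd (primes_uniq n) (all_prime_primes n) _ => p hp.
  have [pp op pn] := prim p hp.
  have [_ [_ hsum]] := HCp p pp pn.
  move: hsum; rewrite /dvdn -modn_summ => hsum.
  rewrite -modn_summ (eq_bigr (fun i : 'I_(size s) => C p i * nth 0 s i %% p)) //.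
  move=> i _.
  rewrite -modnMml (HAp i p hp) modnMml /f.
  case: ifP => // /andP [iu /eqP pq].
  have [_ qy _] := Hq i (ltn_ord i) iu.
  rewrite -pq in qy.
  by rewrite !(eqP (dvdn_mull _ qy)).
Qed.
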